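(* Let $N\ge 2$ and let $\mathcal{H}$ be the class of $N$-layer feedforward networks $h=\varphi_N\circ\cdots\circ\varphi_1:\mathcal{X}\to\mathcal{Y}$ with $\varphi_k\in\Phi_k$. For $i\in\{1,\dots,N-1\}$ let $\mathcal{G}_i=\{\varphi_i\circ\cdots\circ\varphi_1:\varphi_k\in\Phi_k\}$ and $\mathcal{F}_i=\{\varphi_N\circ\cdots\circ\varphi_{i+1}:\varphi_k\in\Phi_k\}$, so $\mathcal{H}=\mathcal{F}_i\mathcal{G}_i$. For $h=\varphi_N\circ\cdots\circ\varphi_1\in\mathcal{H}$ write $g_i=\varphi_i\circ\cdots\circ\varphi_1$. Then $$R_T(h)\le R_S(h)+\min_{1\le i<N}\Big\{d_{\mathcal{F}_i\Delta\mathcal{F}_i}\big(p_S^{g_i}(Z),p_T^{g_i}(Z)\big)+d_{{\mathcal{F}_i}_{\mathcal{G}_i\Delta\mathcal{G}_i}}(p_S,p_T)+\lambda_{\mathcal{F}_i\mathcal{G}_i}(g_i)\Big\},$$ where $\lambda_{\mathcal{F}_i\mathcal{G}_i}(g_i)=\inf_{f'\in\mathcal{F}_i,\,g'\in\mathcal{G}_i}\big[2R_S(f'g_i)+R_S(f'g')+R_T(f'g')\big]$.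
   Context: $\mathcal{X}\subseteq\mathbb{R}^n$, $\mathcal{Y}=\{0,1\}$; $\Phi_k$ is a class of maps from the $(k-1)$-th layer space to the $k$-th layer space (layer $0$ space is $\mathcal{X}$, layer $N$ space is $\mathcal{Y}$). $p_S,p_T$ are probability distributions on $\mathcal{X}\times\mathcal{Y}$. Composition is written by juxtaposition. Loss is zero-one $\ell(a,b)=\mathbf{1}[a\ne b]$; for $D\in\{S,T\}$, $R_D(h)=\mathbb{E}_{(x,y)\sim p_D}[\ell(h(x),y)]$ and $R_D(h,h')=\mathbb{E}_{x\sim p_D}[\ell(h(x),h'(x))]$ ($x$ from the $\mathcal{X}$-marginal of $p_D$). $p_D^{g}(Z)$ is the distribution of $g(X)$ for $X$ from the $\mathcal{X}$-marginal of $p_D$. For a predictor class $\mathcal{F}$ and embedding $g$: $d_{\mathcal{F}\Delta\mathcal{F}}(p_S^g(Z),p_T^g(Z))=\sup_{f_1,f_2\in\mathcal{F}}|R_S(f_1g,f_2g)-R_T(f_1g,f_2g)|$. For classes $\mathcal{F},\mathcal{G}$: $d_{\mathcal{F}_{\mathcal{G}\Delta\mathcal{G}}}(p_S,p_T)=\sup_{f\in\mathcal{F};\,g_1,g_2\in\mathcal{G}}|R_S(fg_1,fg_2)-R_T(fg_1,fg_2)|$. *)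

(* Defs.v *)
From HB Require Import structures.
From mathcomp Require Import all_boot all_order all_algebra.
From mathcomp Require Import all_classical all_reals all_analysis.
Set Implicit Arguments. Unset Strict Implicit. Unset Printing Implicit Defensive.
Import Order.TTheory GRing.Theory Num.Theory.
Local Open Scope classical_set_scope.
Local Open Scope ring_scope.
Local Open Scope ereal_scope.

Section Risks.
Context {R : realType} {dX : measure_display} {X : measurableType dX}.

Definition risk (P : probability (X * bool)%type R) (h : X -> bool) : \bar R :=
  P [set xy | h xy.1 != xy.2].

Definition risk2 (P : probability (X * bool)%type R) (h h' : X -> bool) : \bar R :=
  P [set xy | h xy.1 != h' xy.1].

Definition dFF {U : Type} (PS PT : probability (X * bool)%type R)
  (F : set (U -> bool)) (g : X -> U) : \bar R :=
  ereal_sup [set v | exists f1 f2, F f1 /\ F f2 /\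
     v = `| risk2 PS (f1 \o g) (f2 \o g) - risk2 PT (f1 \o g) (f2 \o g) |].

Definition dFGG {U : Type} (PS PT : probability (X * bool)%type R)
  (F : set (U -> bool)) (G : set (X -> U)) : \bar R :=
  ereal_sup [set v | exists f g1 g2, F f /\ G g1 /\ G g2 /\
     v = `| risk2 PS (f \o g1) (f \o g2) - risk2 PT (f \o g1) (f \o g2) |].

Definition lambdaFG {U : Type} (PS PT : probability (X * bool)%type R)
  (F : set (U -> bool)) (G : set (X -> U)) (g : X -> U) : \bar R :=
  ereal_inf [set v | exists f' g', F f' /\ G g' /\
     v = 2%:E * risk PS (f' \o g) + risk PS (f' \o g') + risk PT (f' \o g')].

End Risks.

(* Layer spaces Z 0 (= input space X), Z 1, ..., Z M
   (M = N-1 hidden layers), output space bool.  Phi k is the class of maps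
   Z k -> Z k.+1 (the paper's Phi_{k+1}), for k < M; Phiout is the class of
   maps Z M -> bool (the paper's Phi_N). *)
Section Layers.
Context (Z : nat -> Type) (Phi : forall k, set (Z k -> Z k.+1)).

Fixpoint netcomp (phi : forall k, Z k -> Z k.+1) (i : nat) : Z 0 -> Z i :=
  match i return Z 0 -> Z i with
  | 0 => id
  | j.+1 => phi j \o netcomp phi j
  end.

Fixpoint Gcls (i : nat) : set (Z 0 -> Z i) :=
  match i return set (Z 0 -> Z i) with
  | 0 => [set id]
  | j.+1 => [set f | exists p g, @Phi j p /\ @Gcls j g /\ f = p \o g]
  end.

Context (M : nat) (Phiout : set (Z M -> bool)).

(* Fcls i = { fo o phi_{M-1} o ... o phi_i : phi_k in Phi k, fo in Phiout }
   (the paper's F_i), for i <= M *)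
Inductive Fcls : forall i, (Z i -> bool) -> Prop :=
  | Fcls_out fo : Phiout fo -> Fcls fo
  | Fcls_cons i p f : @Phi i p -> @Fcls i.+1 f -> @Fcls i (f \o p).

End Layers.

Arguments Gcls {Z} Phi i.
Arguments Fcls {Z} Phi M Phiout i _.
Arguments netcomp {Z} phi i.

(* Main.v *)
Require Import Defs.
From HB Require Import structures.
From mathcomp Require Import all_boot all_order all_algebra.
From mathcomp Require Import all_classical all_reals all_analysis.
From mathcomp Require Import lra.
Import Order.TTheory GRing.Theory Num.Theory.
Local Open Scope classical_set_scope.
Local Open Scope ring_scope.
Local Open Scope ereal_scope.

Lemma meas_neq d (T : measurableType d) (a b : T -> bool) :
  measurable_fun setT a -> measurable_fun setT b -> measurable [set x | a x != b x].
Proof.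
move=> ma mb.
have -> : [set x | a x != b x] = (a @^-1` [set true] `&` b @^-1` [set false]) `|`
   (a @^-1` [set false] `&` b @^-1` [set true]).
  apply/seteqP; split => x /=; by case: (a x); case: (b x) => //=; firstorder.
apply: measurableU; apply: measurableI;
  (rewrite -[X in measurable X]setTI; (apply: ma || apply: mb) => //).
Qed.

Lemma meas_tri d (T : measurableType d) (R : realType) (P : probability T R) (A B C : set T) :
  measurable A -> measurable B -> measurable C -> A `<=` B `|` C -> P A <= P B + P C.
Proof.
move=> mA mB mC sub.
apply: le_trans (measureU2 _ mB mC).
by apply: le_measure => //; rewrite inE //; apply: measurableU.
Qed.

Lemma arith (R : realType) (tH sH t1 s1 sM T2a T2b S2b T2c S2c : \bar R) (r1 r2 : R) :
  tH \is a fin_num -> sH \is a fin_num -> t1 \is a fin_num -> s1 \is a fin_num ->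
  sM \is a fin_num -> T2a \is a fin_num -> T2b \is a fin_num -> S2b \is a fin_num ->
  T2c \is a fin_num -> S2c \is a fin_num ->
  tH <= t1 + T2a -> T2a <= T2b + T2c -> S2b <= sH + sM -> S2c <= sM + s1 ->
  `|S2b - T2b| <= r1%:E -> `|S2c - T2c| <= r2%:E ->
  tH - (sH + (r1%:E + r2%:E)) <= 2%:E * sM + s1 + t1.
Proof.
case: tH => // tH _; case: sH => // sH _; case: t1 => // t1 _; case: s1 => // s1 _;
case: sM => // sM _; case: T2a => // T2a _; case: T2b => // T2b _; case: S2b => // S2b _;
case: T2c => // T2c _; case: S2c => // S2c _.
rewrite /=.
move=> h1 h2 h3 h4 /ler_normlP[h5 h5'] /ler_normlP[h6 h6']. rewrite -!EFinD !lee_fin in h1 h2 h3 h4. rewrite -EFinM -!EFinD lee_fin. lra.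
Qed.

Lemma tri1 (a b c : bool) : a != c -> b != c \/ a != b.
Proof. by case: a; case: b; case: c; auto. Qed.
Lemma tri2 (a b c : bool) : a != c -> a != b \/ b != c.
Proof. by case: a; case: b; case: c; auto. Qed.
Lemma tri3 (a b c : bool) : a != b -> a != c \/ b != c.
Proof. by case: a; case: b; case: c; auto. Qed.

Lemma bound_i (R : realType) d (X : measurableType d) dU (U : measurableType dU)
  (PS PT : probability (X * bool)%type R) (F : set (U -> bool)) (G : set (X -> U))
  (f : U -> bool) (g : X -> U) (Ff : F f) (Gg : G g)
  (FM : forall f, F f -> measurable_fun setT f)
  (GM : forall g, G g -> measurable_fun setT g) :
  risk PT (f \o g) <= risk PS (f \o g) +
    (dFF PS PT F g + dFGG PS PT F G + lambdaFG PS PT F G g).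
Proof.
have mR : forall (P : probability (X * bool)%type R) h, measurable_fun setT h ->
    measurable [set xy : X * bool | h xy.1 != xy.2].
  move=> P h mh; apply: (@meas_neq _ _ (h \o fst) (snd)) => //.
  exact: measurableT_comp mh measurable_fst.
have mR2 : forall h h' : X -> bool, measurable_fun setT h -> measurable_fun setT h' ->
    measurable [set xy : X * bool | h xy.1 != h' xy.1].
  move=> h h' mh mh'.
  have m1 : measurable_fun [set: X * bool] (h \o fst) := measurableT_comp mh measurable_fst.
  have m2 : measurable_fun [set: X * bool] (h' \o fst) := measurableT_comp mh' measurable_fst.
  exact: (meas_neq _ _ _ _ m1 m2).
have mc : forall f0 g0, F f0 -> G g0 -> measurable_fun setT (f0 \o g0).
  by move=> f0 g0 /FM ? /GM ?; apply: measurableT_comp.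
have finR : forall (P : probability (X * bool)%type R) h, measurable_fun setT h ->
    risk P h \is a fin_num.
  by move=> P h mh; apply: fin_num_measure; apply: mR.
have finR2 : forall (P : probability (X * bool)%type R) (h h' : X -> bool), measurable_fun setT h ->
    measurable_fun setT h' -> risk2 P h h' \is a fin_num.
  by move=> P h h' mh mh'; apply: fin_num_measure; apply: mR2.
have d1ge : forall f1 f2, F f1 -> F f2 ->
   `|risk2 PS (f1 \o g) (f2 \o g) - risk2 PT (f1 \o g) (f2 \o g)| <= dFF PS PT F g.
  move=> f1 f2 F1 F2; apply: le_ereal_sup_tmp.
  by eexists; [exists f1, f2; split; [|split; [|reflexivity]] | exact: lexx].
have d2ge : forall f0 g1 g2, F f0 -> G g1 -> G g2 ->
   `|risk2 PS (f0 \o g1) (f0 \o g2) - risk2 PT (f0 \o g1) (f0 \o g2)| <= dFGG PS PT F G.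
  move=> f0 g1 g2 F0 G1 G2; apply: le_ereal_sup_tmp.
  by eexists; [exists f0, g1, g2; split; [|split; [|split; [|reflexivity]]] | exact: lexx].
have d1p : 0 <= dFF PS PT F g := le_trans (abse_ge0 _) (d1ge f f Ff Ff).
have d2p : 0 <= dFGG PS PT F G := le_trans (abse_ge0 _) (d2ge f g g Ff Gg Gg).
have lp : 0 <= lambdaFG PS PT F G g.
  apply/ereal_infP => v [f' [g' [_ [_ ->]]]].
  by rewrite !adde_ge0 // ?mule_ge0 // /risk measure_ge0.
have rsp : 0 <= risk PS (f \o g) by rewrite /risk measure_ge0.
have ninf : forall x : \bar R, 0 <= x -> x != -oo.
  by move=> x x0; apply: contraTneq x0 => ->.
case E1: (dFF PS PT F g) d1p => [r1| |] // _; last first.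
  by rewrite (addye (ninf _ d2p)) (addye (ninf _ lp)) (addey (ninf _ rsp)) leey.
case E2: (dFGG PS PT F G) d2p => [r2| |] // _; last first.
  by rewrite addey // (addye (ninf _ lp)) (addey (ninf _ rsp)) leey.
rewrite addeA -leeBlDl; last by rewrite fin_numD (finR _ _ (mc _ _ Ff Gg)).
apply/ereal_infP => v [f' [g' [Ff' [Gg' ->]]]].
have mfg := mc _ _ Ff Gg.
have mfg' := mc _ _ Ff' Gg'.
have mf'g := mc _ _ Ff' Gg.
apply: (arith _ _ _ _ _ _ (risk2 PT (f \o g) (f' \o g')) (risk2 PT (f \o g) (f' \o g))
   (risk2 PS (f \o g) (f' \o g)) (risk2 PT (f' \o g) (f' \o g'))
   (risk2 PS (f' \o g) (f' \o g'))); rewrite ?finR ?finR2 //.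
- apply: meas_tri; [exact: mR|exact: mR|exact: mR2|].
  by move=> xy /=; apply: tri1.
- apply: meas_tri; [exact: mR2|exact: mR2|exact: mR2|].
  by move=> xy /=; apply: tri2.
- apply: meas_tri; [exact: mR2|exact: mR|exact: mR|].
  by move=> xy /=; apply: tri3.
- apply: meas_tri; [exact: mR2|exact: mR|exact: mR|].
  by move=> xy /=; apply: tri3.
- by rewrite -E1; apply: d1ge.
- by rewrite -E2; apply: d2ge.
Qed.

Lemma decomp (Z : nat -> Type) (Phi : forall k, set (Z k -> Z k.+1)) (M : nat)
  (Phiout : set (Z M -> bool)) (phi : forall k, Z k -> Z k.+1) (fo : Z M -> bool)
  (hphi : forall k, (k < M)%N -> Phi k (phi k)) (hfo : Phiout fo) :
  forall dd j, (j + dd = M)%N -> exists f, Fcls Phi M Phiout j f /\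
     forall x, fo (netcomp phi M x) = f (netcomp phi j x).
Proof.
elim => [|dd IH] j e.
  rewrite addn0 in e; subst M.
  by exists fo; split => //; exact: Fcls_out.
have e1 : (j.+1 + dd = M)%N by rewrite addSnnS.
have [f [Ff Hf]] := IH j.+1 e1.
exists (f \o phi j); split.
  apply: Fcls_cons => //; apply: hphi; rewrite -e; rewrite -addn1 leq_add2l //.
by move=> x; rewrite Hf.
Qed.

Lemma Gcls_net (Z : nat -> Type) (Phi : forall k, set (Z k -> Z k.+1))
  (phi : forall k, Z k -> Z k.+1) :
  forall i, (forall k, (k < i)%N -> Phi k (phi k)) -> Gcls Phi i (netcomp phi i).
Proof.
elim => [|i IH] h /=; first by [].
exists (phi i), (netcomp phi i); split; first exact: h.
by split => //; apply: IH => k ki; apply: h; apply: ltnW.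
Qed.

Lemma Fcls_meas (dZ : nat -> measure_display) (Z : forall k, measurableType (dZ k))
  (Phi : forall k, set (Z k -> Z k.+1)) (M : nat) (Phiout : set (Z M -> bool))
  (PhiM : forall k p, (k < M)%N -> Phi k p -> measurable_fun setT p)
  (PhioutM : forall fo, Phiout fo -> measurable_fun setT fo) i f :
  @Fcls (fun k => Z k) Phi M Phiout i f -> (i <= M)%N /\ measurable_fun setT f.
Proof.
elim => [fo Hfo | i0 p f0 Hp _ [le mf]]; first by split => //; apply: PhioutM.
split; first exact: ltnW.
apply: measurableT_comp => //; exact: PhiM Hp.
Qed.

Lemma Gcls_meas (dZ : nat -> measure_display) (Z : forall k, measurableType (dZ k))
  (Phi : forall k, set (Z k -> Z k.+1)) (M : nat)
  (PhiM : forall k p, (k < M)%N -> Phi k p -> measurable_fun setT p) :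
  forall i g, (i <= M)%N -> @Gcls (fun k => Z k) Phi i g -> measurable_fun setT g.
Proof.
elim => [|i IH] g iM /=; first by move=> ->.
move=> [p [g0 [Hp [Hg ->]]]].
apply: measurableT_comp; first exact: PhiM Hp.
by apply: IH => //; apply: ltnW.
Qed.

Theorem corollary6 (R : realType) (N : nat) (hN : (2 <= N)%N)
  (dZ : nat -> measure_display) (Z : forall k, measurableType (dZ k))
  (Phi : forall k, set (Z k -> Z k.+1)) (Phiout : set (Z N.-1 -> bool))
  (PhiM : forall k p, (k < N.-1)%N -> Phi k p -> measurable_fun setT p)
  (PhioutM : forall fo, Phiout fo -> measurable_fun setT fo)
  (PS PT : probability (Z 0%N * bool)%type R)
  (phi : forall k, Z k -> Z k.+1) (fo : Z N.-1 -> bool)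
  (hphi : forall k, (k < N.-1)%N -> Phi k (phi k)) (hfo : Phiout fo) :
  risk PT (fo \o @netcomp (fun k => Z k) phi N.-1) <=
  risk PS (fo \o @netcomp (fun k => Z k) phi N.-1) +
  \big[Order.min/+oo]_(1 <= i < N)
     (dFF PS PT (@Fcls (fun k => Z k) Phi N.-1 Phiout i) (@netcomp (fun k => Z k) phi i)
      + dFGG PS PT (@Fcls (fun k => Z k) Phi N.-1 Phiout i) (@Gcls (fun k => Z k) Phi i)
      + lambdaFG PS PT (@Fcls (fun k => Z k) Phi N.-1 Phiout i) (@Gcls (fun k => Z k) Phi i) (@netcomp (fun k => Z k) phi i)).
Proof.
have rsp : 0 <= risk PS (fo \o @netcomp (fun k => Z k) phi N.-1).
  by rewrite /risk measure_ge0.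
rewrite big_nat_cond.
apply: (big_ind (fun v => risk PT _ <= risk PS _ + v)).
- by rewrite addey ?leey //; apply: contraTneq rsp => ->.
- move=> x y hx hy; rewrite /Order.min; by case: ifP.
move=> i /andP[/andP[i1 iN] _].
have iM : (i <= N.-1)%N by rewrite -ltnS prednK // (leq_trans _ hN).
have [f [Ff Hf]] := @decomp (fun k => Z k) Phi N.-1 Phiout phi fo hphi hfo _ _ (subnKC iM).
have -> : fo \o netcomp phi N.-1 = f \o netcomp phi i by apply: funext => x /=; rewrite Hf.
apply: bound_i => //.
- apply: Gcls_net => k ki; apply: hphi; exact: leq_trans ki iM.
- by move=> f0 /(@Fcls_meas dZ Z Phi N.-1 Phiout PhiM PhioutM) [].
- by move=> g0; apply: (@Gcls_meas dZ Z Phi N.-1 PhiM i g0 iM).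
Qed.
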